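(* Let $\mathcal{A}$ be a synchronizing automaton with Wedderburn–Artin components indexed by $[1,k]$ as in the context. Then $\mathrm{Fr}(\mathcal{A})\le\min\{\mathrm{Rnk}(\mathcal{I}_i): i\in[1,k]\}$. Moreover, if $\mathrm{Fs}(\mathcal{A})\setminus\mathrm{Rad}(\mathcal{A})\neq\emptyset$, then $\min\{\mathrm{Rnk}(\mathcal{I}_i): i\in[1,k]\}=\mathrm{Fr}(\mathcal{A})$.
   Context: Let $\mathcal{A}=\langle Q,\Sigma,\delta\rangle$ be a synchronizing automaton with state set $Q=\{q_1,\dots,q_n\}$ and finite alphabet $\Sigma$; write $q\cdot u$ for the action of $u\in\Sigma^*$, extended to subsets. A word $u$ is reset if $|Q\cdot u|=1$; $\mathrm{Syn}(\mathcal{A})$ is the set of reset words. The rank of a word is $\mathrm{rk}(u)=|Q\cdot u|$. Each word $u$ acts linearly on $\mathbb{C}Q$ by $q\mapsto q\cdot u$, preserving $w^\perp=\{x:\langle x,w\rangle=0\}$ with $w=q_1+\dots+q_n$; $u$ is reset iff it acts as $0$ on $w^\perp$. Let $\rho:\Sigma^*\to\mathbb{M}_{n-1}(\mathbb{C})\cong\mathrm{End}(w^\perp)$ be the induced representation, $\mathcal{R}$ the $\mathbb{C}$-algebra generated by $\rho(\Sigma^* )$, and $\mathrm{Rad}(\mathcal{A})=\rho^{-1}(\mathrm{Rad}(\mathcal{R}))$ the set of radical words (Jacobson radical). By Wedderburn–Artin, $\mathcal{R}/\mathrm{Rad}(\mathcal{R})\cong\mathbb{M}_{n_1}(\mathbb{C})\times\dots\times\mathbb{M}_{n_k}(\mathbb{C})$;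 let $\psi:\mathcal{R}\to\mathcal{R}/\mathrm{Rad}(\mathcal{R})$ be the quotient map, $\varphi_i$ the projection onto the $i$-th factor, and $\theta_i=\varphi_i\circ\psi\circ\rho:\Sigma^*\to\mathbb{M}_{n_i}(\mathbb{C})$, with $0_i$ the zero matrix. A word $u$ is radical iff $\theta_i(u)=0_i$ for all $i$. The monoid $\mathcal{M}_i=\theta_i(\Sigma^* )$ has a unique $0$-minimal ideal $\mathcal{I}_i$. For $g\in\mathcal{I}_i\setminus\{0_i\}$ put $\mathrm{Rnk}_i(g)=\min\{\mathrm{rk}(u):\theta_i(u)=g\}$ and $\mathrm{Rnk}(\mathcal{I}_i)=\min\{\mathrm{Rnk}_i(g): g\in\mathcal{I}_i\setminus\{0_i\}\}$. The former-rank is $\mathrm{Fr}(\mathcal{A})=\min\{|Q\cdot u|:u\in\Sigma^*\setminus\mathrm{Syn}(\mathcal{A})\}$ and the set of former-synchronizing words is $\mathrm{Fs}(\mathcal{A})=\{u\in\Sigma^*:|Q\cdot u|=\mathrm{Fr}(\mathcal{A})\}$. *)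

(* Defs.v *)
From HB Require Import structures.
From mathcomp Require Import all_boot all_order all_algebra.
From mathcomp Require Import algC.
From Stdlib Require Import ClassicalEpsilon.

Set Implicit Arguments.
Unset Strict Implicit.
Unset Printing Implicit Defensive.

Import GRing.Theory.
Local Open Scope ring_scope.

(* Minimum of a set of naturals (meaningful when the set is nonempty). *)
Definition natmin (P : nat -> Prop) : nat :=
  epsilon (inhabits 0%N) (fun m => P m /\ forall j, P j -> (m <= j)%N).

Section Auto.
Variables (n : nat) (Sigma : finType) (delta : 'I_n.+1 -> Sigma -> 'I_n.+1).

Definition act (q : 'I_n.+1) (u : seq Sigma) : 'I_n.+1 := foldl delta q u.
Definition img (u : seq Sigma) : {set 'I_n.+1} := [set act q u | q : 'I_n.+1].
Definition rk (u : seq Sigma) : nat := #|img u|.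
Definition is_reset (u : seq Sigma) : Prop := rk u = 1%N.
Definition synchronizing : Prop := exists u, is_reset u.

(* rho u : matrix of the action of u on w^perp, in the basis
   b_i = q_(lift ord_max i) - q_ord_max (i < n), row-vector convention
   (x |-> x *m rho u), so that rho (u ++ v) = rho u *m rho v. *)
Definition rho (u : seq Sigma) : 'M[algC]_n :=
  \matrix_(i, j) (((act (lift ord_max i) u == lift ord_max j)%:R : algC)
                  - (act ord_max u == lift ord_max j)%:R).

Definition mx_subalg (S : 'M[algC]_n -> Prop) : Prop :=
  [/\ S 1%:M,
      (forall A B, S A -> S B -> S (A + B)),
      (forall (c : algC) A, S A -> S (c *: A)) &
      (forall A B, S A -> S B -> S (A *m B))].

Definition Ralg (A : 'M[algC]_n) : Prop :=
  forall S, mx_subalg S -> (forall u, S (rho u)) -> S A.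

Definition left_ideal (R L : 'M[algC]_n -> Prop) : Prop :=
  [/\ (forall x, L x -> R x), L 0,
      (forall x y, L x -> L y -> L (x - y)) &
      (forall a x, R a -> L x -> L (a *m x))].

Definition max_left_ideal (R L : 'M[algC]_n -> Prop) : Prop :=
  [/\ left_ideal R L, ~ (forall x, R x -> L x) &
      (forall L', left_ideal R L' -> (forall x, L x -> L' x) ->
         ~ (forall x, R x -> L' x) -> forall x, L' x -> L x)].

Definition JRad (R : 'M[algC]_n -> Prop) (x : 'M[algC]_n) : Prop :=
  R x /\ forall L, max_left_ideal R L -> L x.

Definition radical_word (u : seq Sigma) : Prop := JRad Ralg (rho u).

(* Wedderburn-Artin data: psi = (phi_i)_i : R -> prod_i M_(d i)(C) is a
   surjective unital algebra morphism with kernel Rad(R), i.e. it induces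
   R / Rad(R) ~= M_(d 0)(C) x ... x M_(d (k-1))(C). *)
Definition WA_decomp (k : nat) (d : 'I_k -> nat)
    (phi : forall i : 'I_k, 'M[algC]_n -> 'M[algC]_(d i)) : Prop :=
  (forall i, 0 < d i)%N /\
  [/\ (forall i (c : algC) A B, Ralg A -> Ralg B ->
          phi i (c *: A + B) = c *: phi i A + phi i B),
      (forall i A B, Ralg A -> Ralg B -> phi i (A *m B) = phi i A *m phi i B),
      (forall i, phi i 1%:M = 1%:M),
      (forall g : forall i, 'M[algC]_(d i),
          exists A, Ralg A /\ forall i, phi i A = g i) &
      (forall A, Ralg A -> ((forall i, phi i A = 0) <-> JRad Ralg A))].

Definition theta (k : nat) (d : 'I_k -> nat)
    (phi : forall i : 'I_k, 'M[algC]_n -> 'M[algC]_(d i)) (i : 'I_k)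
    (u : seq Sigma) : 'M[algC]_(d i) := phi i (rho u).

Definition theta_monoid (k : nat) (d : 'I_k -> nat)
    (phi : forall i : 'I_k, 'M[algC]_n -> 'M[algC]_(d i)) (i : 'I_k)
    (g : 'M[algC]_(d i)) : Prop := exists u, theta phi i u = g.

Definition Rnk_i (k : nat) (d : 'I_k -> nat)
    (phi : forall i : 'I_k, 'M[algC]_n -> 'M[algC]_(d i)) (i : 'I_k)
    (g : 'M[algC]_(d i)) : nat :=
  natmin (fun r => exists u, theta phi i u = g /\ rk u = r).

Definition RnkI (k : nat) (d : 'I_k -> nat)
    (phi : forall i : 'I_k, 'M[algC]_n -> 'M[algC]_(d i)) (i : 'I_k)
    (I : 'M[algC]_(d i) -> Prop) : nat :=
  natmin (fun r => exists g, [/\ I g, g <> 0 & Rnk_i phi g = r]).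

Definition minRnk (k : nat) (d : 'I_k -> nat)
    (phi : forall i : 'I_k, 'M[algC]_n -> 'M[algC]_(d i))
    (I : forall i : 'I_k, 'M[algC]_(d i) -> Prop) : nat :=
  natmin (fun r => exists i, RnkI phi (I i) = r).

Definition Fr : nat := natmin (fun r => exists u, ~ is_reset u /\ rk u = r).
Definition Fs (u : seq Sigma) : Prop := rk u = Fr.

End Auto.

Definition mon_ideal (m : nat) (M J : 'M[algC]_m -> Prop) : Prop :=
  [/\ (exists g, J g), (forall g, J g -> M g) &
      (forall a b g, M a -> M b -> J g -> J (a *m g *m b))].

Definition zero_minimal_ideal (m : nat) (M J : 'M[algC]_m -> Prop) : Prop :=
  [/\ mon_ideal M J, (exists g, J g /\ g <> 0) &
      (forall J', mon_ideal M J' -> (forall g, J' g -> J g) ->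
         (forall g, J' g -> g = 0) \/ (forall g, J g -> J' g))].

Arguments theta_monoid {n Sigma} delta {k d} phi i g.
Arguments Rnk_i {n Sigma} delta {k d} phi i g.
Arguments RnkI {n Sigma} delta {k d} phi i I.
Arguments theta {n Sigma} delta {k d} phi i u.

(* Main.v *)
Require Import Defs.
From HB Require Import structures.
From mathcomp Require Import all_boot all_order all_algebra.
From mathcomp Require Import algC zify.
From Stdlib Require Import Classical ClassicalEpsilon.

Set Implicit Arguments.
Unset Strict Implicit.
Unset Printing Implicit Defensive.
Import GRing.Theory.
Local Open Scope ring_scope.

Lemma natmin_spec (P : nat -> Prop) : (exists j, P j) ->
  P (natmin P) /\ forall j, P j -> (natmin P <= j)%N.
Proof.
move=> [j Pj]; rewrite /natmin; apply: (epsilon_spec (inhabits 0%N) (fun m => P m /\ forall j, P j -> (m <= j)%N)).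
have: forall N j, (j <= N)%N -> P j ->
   exists m, P m /\ forall j', P j' -> (m <= j')%N.
  elim=> [|N IH] j0 hj Pj0.
    exists j0; split=> // j' _; by move: hj; rewrite leqn0 => /eqP ->.
  case: (classic (exists j', P j' /\ (j' < j0)%N)) => [[j' [Pj' lt]]|nex].
    apply: (IH j') => //; by rewrite -ltnS (leq_trans lt).
  exists j0; split=> // j' Pj'; rewrite leqNgt; apply/negP => lt.
  by apply: nex; exists j'.
by move=> /(_ j j (leqnn j) Pj).
Qed.

Lemma subspace_mx m (S : 'rV[algC]_m -> Prop) :
  S 0 -> (forall u v, S u -> S v -> S (u + v)) ->
  (forall c u, S u -> S (c *: u)) ->
  exists B : 'M[algC]_m, forall v, S v <-> (v <= B)%MS.
Proof.
move=> S0 SD SZ.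
have span : forall r (A : 'M[algC]_(r, m)), (forall i, S (row i A)) ->
    forall v : 'rV_m, (v <= A)%MS -> S v.
  move=> r A hA v /mulmxKpV <-; rewrite mulmx_sum_row.
  by apply: big_ind => // i _; apply: SZ.
suff: forall t (B : 'M[algC]_m), (forall i, S (row i B)) -> (m - \rank B <= t)%N ->
    exists B : 'M[algC]_m, forall v, S v <-> (v <= B)%MS.
  by move/(_ m 0); apply => //; [move=> i; rewrite row0 | rewrite leq_subr].
elim=> [|t IH] B hB ht;
  (case: (classic (forall v, S v -> (v <= B)%MS)) => [all|];
    [by exists B => v; split; [apply: all | apply: span hB v] |
     move=> /not_all_ex_not [v /(imply_to_and (S v))] [Sv nvB]]);
  (have hB' : forall i, S (row i (B + v)%MS) by
    move=> i; case/sub_addsmxP: (row_sub i (B + v)%MS) => [[u1 u2] ->] /=;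
    apply: SD; [apply: span hB _ (submxMl u1 B) |
       rewrite [u2]mx11_scalar mul_scalar_mx; exact: SZ]);
  (have lt : (\rank B < \rank (B + v)%MS)%N by
    apply: rank_ltmx; rewrite ltmxE addsmxSl /=; apply/negP => h;
    apply: nvB; exact/idP/(submx_trans (addsmxSr B v) h));
  have := rank_leq_col (B + v)%MS.
  move=> hle; exfalso; move: ht lt hle; lia.
move=> hle; apply: (IH _ hB'); move: ht lt hle; lia.
Qed.
Section Auto2.
Variables (n : nat) (Sigma : finType) (delta : 'I_n.+1 -> Sigma -> 'I_n.+1).

Lemma act_cat q u v : act delta q (u ++ v) = act delta (act delta q u) v.
Proof. by rewrite /act foldl_cat. Qed.

Lemma rho_nil : rho delta [::] = 1%:M.
Proof.
apply/matrixP => i j; rewrite !mxE /act /=.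
rewrite (inj_eq lift_inj) eq_sym (negbTE (neq_lift _ _)) subr0.
by [].
Qed.

Lemma sum_lift (a : 'I_n.+1) (G : 'I_n.+1 -> algC) :
  \sum_(l < n) ((a == lift ord_max l)%:R * (G (lift ord_max l) - G ord_max))
  = G a - G ord_max.
Proof.
have h : \sum_(x < n.+1) (a == x)%:R * (G x - G ord_max) = G a - G ord_max.
  rewrite (bigD1 a) //= eqxx mul1r big1 ?addr0 // => x.
  by rewrite eq_sym => /negbTE ->; rewrite mul0r.
rewrite -h big_ord_recr /= subrr mulr0 addr0.
apply: eq_bigr => l _; have -> : lift ord_max l = widen_ord (leqnSn n) l by apply: val_inj; exact: lift_max.
by [].
Qed.

Lemma rhoM u v : rho delta (u ++ v) = rho delta u *m rho delta v.
Proof.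
apply/matrixP => i j; rewrite !mxE.
under eq_bigr do rewrite !mxE.
set f := fun x => ((act delta x v == lift ord_max j)%:R : algC).
under eq_bigr do rewrite mulrBl.
rewrite sumrB.
rewrite (sum_lift _ f) (sum_lift _ f) !act_cat /f.
by rewrite opprB addrA subrK.
Qed.

Lemma Ralg_rho u : Ralg delta (rho delta u).
Proof. by move=> S _ H. Qed.

Lemma Ralg_sub : mx_subalg (Ralg delta).
Proof.
split.
- by move=> S [].
- by move=> A B hA hB S hS hr; case: (hS) => _ h _ _; apply: h; [exact: (hA S hS hr)|exact: (hB S hS hr)].
- by move=> c A hA S hS hr; case: (hS) => _ _ h _; apply: h; exact: (hA S hS hr).
- by move=> A B hA hB S hS hr; case: (hS) => _ _ _ h; apply: h; [exact: (hA S hS hr)|exact: (hB S hS hr)].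
Qed.

Lemma Ralg1 : Ralg delta 1%:M. Proof. by case: Ralg_sub. Qed.
Lemma RalgD A B : Ralg delta A -> Ralg delta B -> Ralg delta (A + B).
Proof. by case: Ralg_sub => _ h _ _; apply: h. Qed.
Lemma RalgZ c A : Ralg delta A -> Ralg delta (c *: A).
Proof. by case: Ralg_sub => _ _ h _; apply: h. Qed.
Lemma RalgM A B : Ralg delta A -> Ralg delta B -> Ralg delta (A *m B).
Proof. by case: Ralg_sub => _ _ _ h; apply: h. Qed.
Lemma Ralg0 : Ralg delta 0.
Proof. by rewrite -(scale0r (1%:M : 'M[algC]_n)); apply: RalgZ; apply: Ralg1. Qed.
Lemma RalgB A B : Ralg delta A -> Ralg delta B -> Ralg delta (A - B).
Proof. by move=> hA hB; rewrite -scaleN1r; apply: RalgD => //; apply: RalgZ. Qed.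

Lemma img_cat u v : img delta (u ++ v) = [set act delta q v | q in img delta u].
Proof.
rewrite /img -imset_comp; apply: eq_imset => q /=; by rewrite act_cat.
Qed.

Lemma rk_catr u v : (rk delta (u ++ v) <= rk delta u)%N.
Proof. by rewrite /rk img_cat leq_imset_card. Qed.

Lemma rk_catl x u : (rk delta (x ++ u) <= rk delta u)%N.
Proof.
apply: subset_leq_card; apply/subsetP => z /imsetP [q _ ->].
by rewrite act_cat; apply: imset_f.
Qed.

Lemma rk_nil : rk delta [::] = n.+1.
Proof.
by rewrite /rk /img card_imset ?card_ord.
Qed.

Lemma reset_rho u : is_reset delta u -> rho delta u = 0.
Proof.
rewrite /is_reset /rk => /eqP /cards1P [x hx].
have e : forall q, act delta q u = x.
  by move=> q; apply/set1P; rewrite -hx; apply: imset_f.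
by apply/matrixP => i j; rewrite !mxE !e subrr.
Qed.

End Auto2.
Section Auto3.
Variables (n : nat) (Sigma : finType) (delta : 'I_n.+1 -> Sigma -> 'I_n.+1).

Lemma no_JRad1 : (0 < n)%N -> ~ JRad (Ralg delta) 1%:M.
Proof.
move=> n0 [_ hJ].
pose G (w : 'rV[algC]_n) (v : 'rV_n) := exists A, Ralg delta A /\ v = w *m A^T.
have Gsp : forall w, exists B : 'M[algC]_n, forall v, G w v <-> (v <= B)%MS.
  move=> w; apply: subspace_mx.
  - exists 0; split; [exact: Ralg0 | by rewrite trmx0 mulmx0].
  - move=> _ _ [A1 [h1 ->]] [A2 [h2 ->]]; exists (A1 + A2); split;
      [exact: RalgD | by rewrite linearD /= mulmxDr].
  - move=> c _ [A [h ->]]; exists (c *: A); split;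
      [exact: RalgZ | by rewrite linearZ /= scalemxAr].
pose P (r : nat) := exists (w : 'rV[algC]_n) (B : 'M[algC]_n), [/\ w != 0, (forall v, G w v <-> (v <= B)%MS) & \rank B = r].
have exP : exists r, P r.
  pose i0 : 'I_n := Ordinal n0.
  pose w0 : 'rV[algC]_n := delta_mx 0 i0.
  have [B0 hB0] := Gsp w0.
  exists (\rank B0), w0, B0; split=> //.
  apply/eqP => /matrixP /(_ 0 i0); rewrite !mxE !eqxx /=.
  by move/eqP; rewrite oner_eq0.
have [[w [B [wn0 GB rB]]] minP] := natmin_spec exP.
pose L x := Ralg delta x /\ w *m x^T = 0.
have L1 : ~ L 1%:M by case=> _; rewrite trmx1 mulmx1; apply/eqP.
apply: (L1); apply: hJ; split.
- split.
  + by move=> x [].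
  + split; [exact: Ralg0 | by rewrite trmx0 mulmx0].
  + move=> x y [hx ex] [hy ey]; split;
      [exact: RalgB | by rewrite linearB /= mulmxBr ex ey subrr].
  + move=> a x ha [hx ex]; split;
      [exact: RalgM | by rewrite trmx_mul mulmxA ex mul0mx].
- by move=> h; apply: L1; apply: h; exact: Ralg1.
- move=> L' [L'R L'0 L'B L'M] sub nfull x L'x.
  have Rx := L'R x L'x.
  split=> //.
  case: (eqVneq (w *m x^T) 0) => // zn0; exfalso.
  set z := w *m x^T in zn0.
  have [Bz GBz] := Gsp z.
  have Pz : P (\rank Bz) by exists z, Bz.
  have le1 := minP _ Pz.
  have sBzB : (Bz <= B)%MS.
    apply/row_subP => i; apply/GB.
    have [A [hA ->]] := (GBz (row i Bz)).2 (row_sub i Bz).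
    exists (A *m x); split; [exact: RalgM | by rewrite /z trmx_mul mulmxA].
  have sBBz : (B <= Bz)%MS.
    rewrite -(mxrank_leqif_sup sBzB).2 eqn_leq mxrankS //=.
    by rewrite rB.
  have Gw : G w w by exists 1%:M; split; [exact: Ralg1 | by rewrite trmx1 mulmx1].
  have : G z w by apply/GBz; apply: submx_trans sBBz; apply/GB.
  move=> [A [hA ew]].
  have Ly : L (1%:M - A *m x).
    split; first by apply: RalgB; [exact: Ralg1 | exact: RalgM].
    by rewrite linearB /= mulmxBr trmx1 mulmx1 {1}ew /z trmx_mul mulmxA subrr.
  have L'1 : L' 1%:M.
    have -> : (1%:M : 'M[algC]_n) = (1%:M - A *m x) - (0 - A *m x)
      by rewrite sub0r opprK subrK.
    apply: (L'B); first exact: sub _ Ly.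
    apply: (L'B) => //; exact: (L'M).
  by apply: nfull => y Ry; rewrite -(mulmx1 y); exact: (L'M).
Qed.

Lemma k_pos k (d : 'I_k -> nat) (phi : forall i : 'I_k, 'M[algC]_n -> 'M[algC]_(d i)) :
  (0 < n)%N -> WA_decomp delta phi -> (0 < k)%N.
Proof.
case: k d phi => // d phi n0 [_ [_ _ _ _ hK]]; exfalso.
apply: (no_JRad1 n0); have [h1 _] := hK 1%:M (@Ralg1 _ _ delta); by apply: h1 => -[].
Qed.

End Auto3.
Lemma mul_delta_entry m (A M : 'M[algC]_m) q r i j :
  (A *m delta_mx q r *m M) i j = A i q * M r j.
Proof.
rewrite -(mul_delta_mx (0 : 'I_1)) mulmxA -colE -mulmxA -rowE mxE big_ord1.
by rewrite !mxE.
Qed.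

Theorem mainTheorem2 (n : nat) (Sigma : finType)
    (delta : 'I_n.+1 -> Sigma -> 'I_n.+1)
    (k : nat) (d : 'I_k -> nat)
    (phi : forall i : 'I_k, 'M[algC]_n -> 'M[algC]_(d i))
    (I : forall i : 'I_k, 'M[algC]_(d i) -> Prop) :
  (0 < n)%N ->
  synchronizing delta ->
  WA_decomp delta phi ->
  (forall i, zero_minimal_ideal (theta_monoid delta phi i) (I i)) ->
  (Fr delta <= minRnk delta phi I)%N /\
  ((exists u, Fs delta u /\ ~ radical_word delta u) ->
     minRnk delta phi I = Fr delta).
Proof.
move=> n0 sync WA Imin.
have kpos := k_pos n0 WA.
case: (WA) => dpos [lin mul one surj ker].
have R0 := @Ralg0 _ _ delta.
have phi0 : forall i, phi i 0 = 0.
  move=> i; have := lin i 1 0 0 R0 R0; rewrite !scale1r addr0 => h.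
  have : phi i 0 + 0 = phi i 0 + phi i 0 by rewrite addr0 -h.
  by move/addrI => <-.
have phiD : forall i A B, Ralg delta A -> Ralg delta B ->
    phi i (A + B) = phi i A + phi i B.
  by move=> i A B hA hB; rewrite -(scale1r A) lin // ?scale1r //; apply: RalgZ.
have phiZ : forall i c A, Ralg delta A -> phi i (c *: A) = c *: phi i A.
  by move=> i c A hA; rewrite -(addr0 (c *: A)) lin // phi0 addr0.
have thetaM : forall i u v, theta delta phi i (u ++ v) =
    theta delta phi i u *m theta delta phi i v.
  by move=> i u v; rewrite /theta rhoM mul //; apply: Ralg_rho.
have theta_nil : forall i, theta delta phi i [::] = 1%:M.
  by move=> i; rewrite /theta rho_nil one.
have theta_reset : forall i u, is_reset delta u -> theta delta phi i u = 0.
  by move=> i u hu; rewrite /theta reset_rho.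
have span : forall i (F : 'M[algC]_(d i) -> 'M[algC]_(d i)),
   (forall c X Y, F (c *: X + Y) = c *: F X + F Y) ->
   (forall w, F (theta delta phi i w) = 0) ->
   forall A, Ralg delta A -> F (phi i A) = 0.
  move=> i.
  pose S A := Ralg delta A /\ forall F : 'M[algC]_(d i) -> 'M[algC]_(d i),
     (forall c X Y, F (c *: X + Y) = c *: F X + F Y) ->
     (forall w, F (theta delta phi i w) = 0) -> F (phi i A) = 0.
  suff: forall A, Ralg delta A -> S A.
    by move=> h F lF hF A hA; exact: (h A hA).2 F lF hF.
  move=> A0 hA0; apply: hA0.
  - split.
    + split; first exact: Ralg1.
      by move=> F lF hF; rewrite -(rho_nil delta); exact: (hF [::]).
    + move=> A B [hA sA] [hB sB]; split; first exact: RalgD.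
      move=> F lF hF.
      by rewrite phiD // -[phi i A]scale1r lF scale1r (sA _ lF hF) (sB _ lF hF) addr0.
    + move=> c A [hA sA]; split; first exact: RalgZ.
      move=> F lF hF.
      have F0 : F 0 = 0.
        by have := lF (-1) 0 0; rewrite !scaleN1r oppr0 add0r addNr.
      by rewrite phiZ // -[c *: phi i A]addr0 lF (sA _ lF hF) scaler0 F0 addr0.
    + move=> A B [hA sA] [hB sB]; split; first exact: RalgM.
      move=> F lF hF.
      rewrite mul //.
      pose F1 X := F (X *m phi i B).
      have lF1 : forall c X Y, F1 (c *: X + Y) = c *: F1 X + F1 Y.
        by move=> c X Y; rewrite /F1 mulmxDl -scalemxAl lF.
      change (F1 (phi i A) = 0).
      apply: (sA F1 lF1) => w; rewrite /F1.
      pose F2 Y := F (theta delta phi i w *m Y).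
      have lF2 : forall c X Y, F2 (c *: X + Y) = c *: F2 X + F2 Y.
        by move=> c X Y; rewrite /F2 mulmxDr -scalemxAr lF.
      change (F2 (phi i B) = 0).
      by apply: (sB F2 lF2) => v; rewrite /F2 -thetaM hF.
  - by move=> u; split; [exact: Ralg_rho | move=> F lF hF; exact: hF u].
have surj1 : forall i (B : 'M[algC]_(d i)), exists A, Ralg delta A /\ phi i A = B.
  move=> i B.
  pose g := fun j => match i =P j with
     | ReflectT e => eq_rect i (fun j => 'M[algC]_(d j)) B j e
     | ReflectF _ => 0 end.
  have [A [hA hg]] := surj g.
  exists A; split => //; rewrite hg /g.
  case: (i =P i) => [e|/(_ erefl) []].
  by rewrite (eq_axiomK e).
have Fr_ex : exists r, exists u, ~ is_reset delta u /\ rk delta u = r.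
  exists n.+1, [::]; split; last exact: rk_nil.
  rewrite /is_reset rk_nil => -[e]; by rewrite e in n0.
have FrP : forall u, ~ is_reset delta u -> (Fr delta <= rk delta u)%N.
  move=> u hu; rewrite /Fr.
  apply: (natmin_spec (P := fun r => exists u, ~ is_reset delta u /\ rk delta u = r) Fr_ex).2.
  by exists u.
have RnkI_ge : forall i, (Fr delta <= RnkI delta phi i (I i))%N.
  move=> i; have [[_ Imon Iid] [h [Ih hn0]] _] := Imin i.
  rewrite /RnkI.
  have [[g [Ig gn0 <-]] _] := natmin_spec
    (P := fun r => exists g, [/\ I i g, g <> 0 & Rnk_i delta phi i g = r])
    (ex_intro _ _ (ex_intro _ h (And3 Ih hn0 erefl))).
  rewrite /Rnk_i.
  have [u0 tu0] := Imon g Ig.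
  have [[u [tu <-]] _] := natmin_spec
    (P := fun r => exists u, theta delta phi i u = g /\ rk delta u = r)
    (ex_intro _ _ (ex_intro _ u0 (conj tu0 erefl))).
  by apply: FrP => /(theta_reset i); rewrite tu.
have part1 : (Fr delta <= minRnk delta phi I)%N.
  rewrite /minRnk.
  have [[i <-] _] := natmin_spec
    (P := fun r => exists i, RnkI delta phi i (I i) = r)
    (ex_intro _ _ (ex_intro _ (Ordinal kpos) erefl)).
  exact: RnkI_ge.
split=> //.
move=> [u [Fsu nrad]].
have [i gi] : exists i, phi i (rho delta u) <> 0.
  apply: NNPP => H; apply: nrad.
  have [h1 _] := ker _ (@Ralg_rho _ _ delta u).
  apply: h1 => i; apply: NNPP => hi; apply: H; by exists i.
have [[_ Imon Iid] [h [Ih hn0]] _] := Imin i.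
have [v hv] := Imon h Ih.
have ex : exists x y, I i (theta delta phi i (x ++ u ++ y)) /\
                      theta delta phi i (x ++ u ++ y) <> 0.
  apply: NNPP => H.
  have H0 : forall b c, h *m theta delta phi i b *m theta delta phi i u
                          *m theta delta phi i c *m h = 0.
    move=> b c.
    have es : (v ++ b) ++ u ++ (c ++ v) = ([::] ++ v) ++ (b ++ u ++ c ++ v).
      by rewrite /= !catA.
    have Ie : I i (theta delta phi i ((v ++ b) ++ u ++ (c ++ v))).
      rewrite es thetaM thetaM hv; apply: Iid => //.
      - by exists [::].
      - by exists (b ++ u ++ c ++ v).
    have z : theta delta phi i ((v ++ b) ++ u ++ (c ++ v)) = 0.
      apply: NNPP => nz; apply: H; exists (v ++ b), (c ++ v); split=> //.
    by rewrite -z -hv !thetaM !mulmxA.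
  have H1 : forall B c, h *m B *m theta delta phi i u
                          *m theta delta phi i c *m h = 0.
    move=> B c; have [A [hA <-]] := surj1 i B.
    apply: (span i (fun X => h *m X *m theta delta phi i u *m theta delta phi i c *m h)) => //.
    by move=> a X Y; rewrite mulmxDr -scalemxAr !mulmxDl -!scalemxAl.
  have H2 : forall B C, h *m B *m theta delta phi i u *m C *m h = 0.
    move=> B C; have [A [hA <-]] := surj1 i C.
    apply: (span i (fun Y => h *m B *m theta delta phi i u *m Y *m h)) => //.
    by move=> a X Y; rewrite mulmxDr -scalemxAr mulmxDl -scalemxAl.
  have [[p q] /= hpq | none] := pickP (fun pq : 'I_(d i) * 'I_(d i) => h pq.1 pq.2 != 0);
    last first.
    apply: hn0; apply/matrixP => a b; have := none (a, b); rewrite /= mxE.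
    by move/negbFE/eqP.
  have [[r s] /= hrs | none] := pickP (fun pq : 'I_(d i) * 'I_(d i) =>
      theta delta phi i u pq.1 pq.2 != 0); last first.
    apply: gi; apply/matrixP => a b; have := none (a, b); rewrite /= mxE.
    by move/negbFE/eqP.
  have := H2 (delta_mx q r) (delta_mx s p).
  move/matrixP/(_ p q); rewrite mul_delta_entry mul_delta_entry mxE.
  by move/eqP; rewrite !mulf_eq0 (negbTE hpq) (negbTE hrs).
have [x [y [Ix nx]]] := ex.
set g' := theta delta phi i (x ++ u ++ y) in Ix nx.
have le1 : (Rnk_i delta phi i g' <= rk delta (x ++ u ++ y))%N.
  rewrite /Rnk_i.
  apply: (natmin_spec (P := fun r => exists w, theta delta phi i w = g' /\ rk delta w = r)
    (ex_intro _ _ (ex_intro _ (x ++ u ++ y) (conj erefl erefl)))).2.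
  by exists (x ++ u ++ y).
have le2 : (rk delta (x ++ u ++ y) <= rk delta u)%N.
  exact: leq_trans (rk_catl _ x (u ++ y)) (rk_catr _ u y).
have le3 : (RnkI delta phi i (I i) <= Rnk_i delta phi i g')%N.
  rewrite /RnkI.
  apply: (natmin_spec (P := fun r => exists g, [/\ I i g, g <> 0 & Rnk_i delta phi i g = r])
    (ex_intro _ _ (ex_intro _ g' (And3 Ix nx erefl)))).2.
  by exists g'.
have le4 : (minRnk delta phi I <= RnkI delta phi i (I i))%N.
  rewrite /minRnk.
  apply: (natmin_spec (P := fun r => exists i, RnkI delta phi i (I i) = r)
    (ex_intro _ _ (ex_intro _ i erefl))).2.
  by exists i.
apply/eqP; rewrite eqn_leq part1 andbT.
rewrite -Fsu; apply: (leq_trans le4); apply: (leq_trans le3).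
exact: (leq_trans le1).
Qed.
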